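(* Let $\mathcal{G}$, $A$ and $L_k$ be as in the context, and for $\Phi\in\mathcal{O}_{\mathcal{I}}^+(n,k)$ let $\Phi^{\mathrm{cut}}(\Phi)=\|I-\Phi^TA\Phi\|$ and $\Phi^{\mathrm{cut}}_{\mathcal{G}}=\inf_{\Phi\in\mathcal{O}_{\mathcal{I}}^+(n,k)}\|I-\Phi^TA\Phi\|$. Then: (i) $\Phi^{\mathrm{cut}}\ge0$ and $\Phi^{\mathrm{cut}}$ is invariant under renumberings of the nodes (i.e. $\|I-(P\Phi)^T(PAP^T)(P\Phi)\|=\|I-\Phi^TA\Phi\|$ for every permutation matrix $P$); (ii) $\Phi^{\mathrm{cut}}_{\mathcal{G}}=0$ if and only if $\mathcal{G}$ is $k$-partitionable; (iii) the Cheeger inequality $L_k=\min_{Y^TY=I}\|I-Y^TAY\|\le\Phi^{\mathrm{cut}}_{\mathcal{G}}$ holds.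
   Context: $\mathcal{G}$ is an undirected graph on $n$ nodes with symmetric, entrywise nonnegative adjacency matrix $B$ with zero diagonal; $d=B(1,\dots,1)^T$ is assumed entrywise positive, $D=\operatorname{diag}(d)$, $A=D^{-1/2}BD^{-1/2}$ with eigenvalues $\lambda_1\ge\cdots\ge\lambda_n$ ($\lambda_1=1$), $L_k=\min_{Y\in\mathbb{R}^{n\times k},Y^TY=I}\|I-Y^TAY\|=\big(\sum_{\nu=2}^k(1-\lambda_\nu)^2\big)^{1/2}$, and $\|\cdot\|$ is the Frobenius norm. A matrix $X\in\mathbb{R}^{n\times k}$ is in indicator form if there is a partition of $\{1,\dots,n\}$ into $k$ disjoint nonempty sets $R_1,\dots,R_k$ such that $X_{pj}\neq0$ if and only if $p\in R_j$. $\mathcal{O}_{\mathcal{I}}(n,k)$ is the set of matrices in indicator form with $X^TX=I$, and $\mathcal{O}_{\mathcal{I}}^+(n,k)$ the set of entrywise nonnegative matrices in $\mathcal{O}_{\mathcal{I}}(n,k)$. The graph is $k$-partitionable if it has at least $k$ connected components. *)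

(* Defs.v *)
From HB Require Import structures.
From mathcomp Require Import all_boot all_order all_algebra all_fingroup.
From mathcomp Require Import reals.
Set Implicit Arguments. Unset Strict Implicit. Unset Printing Implicit Defensive.
Import Order.TTheory GRing.Theory Num.Theory.
Local Open Scope ring_scope.

Section Defs.
Variable R : realType.

Definition frob (m p : nat) (M : 'M[R]_(m, p)) : R :=
  Num.sqrt (\sum_(i < m) \sum_(j < p) M i j ^+ 2).

Definition degvec (n : nat) (B : 'M[R]_n) : 'cV[R]_n := B *m const_mx 1.

Definition adj_ok (n : nat) (B : 'M[R]_n) : Prop :=
  [/\ B^T = B, (forall i j, 0 <= B i j), (forall i, B i i = 0)
    & (forall i, 0 < degvec B i 0)].

Definition Dmhalf (n : nat) (B : 'M[R]_n) : 'M[R]_n :=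
  diag_mx (\row_i (Num.sqrt (degvec B i 0))^-1).

Definition normadj (n : nat) (B : 'M[R]_n) : 'M[R]_n :=
  Dmhalf B *m B *m Dmhalf B.

Definition indicator_form (n k : nat) (X : 'M[R]_(n, k)) : Prop :=
  exists Rs : 'I_k -> {set 'I_n},
    [/\ (forall j, Rs j != set0),
        (forall i j, i != j -> [disjoint Rs i & Rs j]),
        (\bigcup_(j < k) Rs j = [set: 'I_n])
      & (forall p j, X p j != 0 <-> p \in Rs j)].

Definition OI (n k : nat) (X : 'M[R]_(n, k)) : Prop :=
  indicator_form X /\ X^T *m X = 1%:M.

Definition OIplus (n k : nat) (X : 'M[R]_(n, k)) : Prop :=
  OI X /\ (forall p j, 0 <= X p j).

Definition phicut (n k : nat) (A : 'M[R]_n) (Phi : 'M[R]_(n, k)) : R :=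
  frob (1%:M - Phi^T *m A *m Phi).

Definition phicutG (n k : nat) (A : 'M[R]_n) : R :=
  inf (fun x : R => exists Phi : 'M[R]_(n, k), OIplus Phi /\ x = phicut A Phi).

Definition Lk (n k : nat) (A : 'M[R]_n) : R :=
  inf (fun x : R => exists Y : 'M[R]_(n, k), Y^T *m Y = 1%:M /\ x = phicut A Y).

Definition edge (n : nat) (B : 'M[R]_n) : rel 'I_n := fun p q => B p q != 0.

Definition partitionable (n : nat) (B : 'M[R]_n) (k : nat) : Prop :=
  (k <= n_comp (edge B) (@predT 'I_n))%N.

End Defs.

(* Main.v *)
Require Import Defs.
From HB Require Import structures.
From mathcomp Require Import all_boot all_order all_algebra all_fingroup.
From mathcomp Require Import reals ring lra classical_sets.
Import Order.TTheory GRing.Theory Num.Theory.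
Set Implicit Arguments. Unset Strict Implicit. Unset Printing Implicit Defensive.
Local Open Scope ring_scope.

Section Aux.
Variable R : realType.

Lemma seq_lb (T : eqType) (P : pred T) (f : T -> R) :
  (forall x, P x -> 0 < f x) ->
  forall s : seq T, exists b, 0 < b /\ forall x, x \in s -> P x -> b <= f x.
Proof.
move=> hP; elim=> [|x s [b [b0 hb]]]; first by exists 1; split => //.
case Px: (P x).
  exists (Num.min b (f x)); split; first by rewrite lt_min b0 hP.
  move=> y; rewrite inE => /orP[/eqP->|ys] Py; rewrite ge_min.
    by rewrite lexx orbT.
  by rewrite hb.
exists b; split => // y; rewrite inE => /orP[/eqP-> |ys]; first by rewrite Px.
exact: hb.
Qed.

Lemma seq_max (T : eqType) (f : T -> R) (x0 : T) :
  forall s : seq T, exists2 x, x \in x0 :: s & forall y, y \in x0 :: s -> f y <= f x.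
Proof.
elim=> [|x s [m hm1 hm2]]; first by exists x0 => [|y]; rewrite ?inE // => /eqP->.
case: (leP (f x) (f m)) => h.
  exists m; first by rewrite !inE in hm1 *; case/orP: hm1 => ->; rewrite ?orbT.
  move=> y; rewrite !inE => /or3P[/eqP->|/eqP->|ys]; first exact: hm2 (mem_head _ _).
    by [].
  by apply: hm2; rewrite inE ys orbT.
exists x; first by rewrite !inE eqxx orbT.
move=> y; rewrite !inE => /or3P[/eqP->|/eqP->|ys]//.
- by apply: le_trans (ltW h); apply: hm2; rewrite inE eqxx.
- by apply: le_trans (ltW h); apply: hm2; rewrite inE ys orbT.
Qed.

Lemma fin_max (T : finType) (f : T -> R) (x0 : T) : exists x, forall y, f y <= f x.
Proof.
have [x _ hx] := seq_max f x0 (enum T).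
by exists x => y; apply: hx; rewrite inE mem_enum orbT.
Qed.

Lemma fin_lb (T : finType) (P : pred T) (f : T -> R) :
  (forall x, P x -> 0 < f x) -> exists b, 0 < b /\ forall x, P x -> b <= f x.
Proof.
move=> hP; have [b [b0 hb]] := seq_lb hP (enum T).
by exists b; split => // x; apply: hb; rewrite mem_enum.
Qed.

Lemma frob_ge0 m p (M : 'M[R]_(m, p)) : 0 <= frob M.
Proof. exact: sqrtr_ge0. Qed.

Lemma frob_diag m (M : 'M[R]_m) i : M i i <= frob M.
Proof.
apply: le_trans (ler_norm _) _.
rewrite /frob -sqrtr_sqr ler_sqrt; last by apply: sumr_ge0 => a _; apply: sumr_ge0 => b _; apply: sqr_ge0.
rewrite (bigD1 i) //= (bigD1 i) //= -addrA lerDl.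
apply: addr_ge0; first by apply: sumr_ge0 => b _; apply: sqr_ge0.
by apply: sumr_ge0 => a _; apply: sumr_ge0 => b _; apply: sqr_ge0.
Qed.

End Aux.

Section G.
Variables (R : realType) (n : nat) (B : 'M[R]_n).
Hypothesis hB : adj_ok B.

Definition dg p := degvec B p 0.
Definition sc p := (Num.sqrt (dg p))^-1.

Lemma dgE p : dg p = \sum_q B p q.
Proof. by rewrite /dg /degvec mxE; apply: eq_bigr => q _; rewrite mxE mulr1. Qed.

Lemma dg_gt0 p : 0 < dg p.
Proof. by have [_ _ _ h] := hB; apply: h. Qed.

Lemma sc_gt0 p : 0 < sc p.
Proof. by rewrite /sc invr_gt0 sqrtr_gt0 dg_gt0. Qed.

Lemma sc_dg p : sc p ^+ 2 * dg p = 1.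
Proof.
rewrite /sc exprVn sqr_sqrtr ?mulVf //; first by rewrite gt_eqF // dg_gt0.
exact/ltW/dg_gt0.
Qed.

Lemma sc_sqrt p : sc p * Num.sqrt (dg p) = 1.
Proof. by rewrite /sc mulVf // gt_eqF // sqrtr_gt0 dg_gt0. Qed.

Lemma AE p q : normadj B p q = sc p * B p q * sc q.
Proof. by rewrite /normadj /Dmhalf mul_mx_diag mxE mul_diag_mx !mxE /sc /dg /degvec !mxE. Qed.

Lemma Bsym p q : B p q = B q p.
Proof. by have [hT _ _ _] := hB; rewrite -{1}hT mxE. Qed.

Lemma B_ge0 p q : 0 <= B p q.
Proof. by have [_ h _ _] := hB; apply: h. Qed.

Lemma edge_sym : symmetric (edge B).
Proof. by move=> p q; rewrite /edge Bsym. Qed.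

Lemma csym : connect_sym (edge B).
Proof. exact/sym_connect_sym/edge_sym. Qed.

End G.

Section Mk.
Variables (R : realType) (n k : nat) (g : 'I_n -> 'I_k) (w : 'I_n -> R).
Hypothesis w_gt0 : forall p, 0 < w p.
Hypothesis g_surj : forall j, exists p, g p = j.

Definition Ssum j := \sum_(q | g q == j) w q ^+ 2.
Definition mkPhi : 'M[R]_(n, k) :=
  \matrix_(p, j) (if g p == j then w p / Num.sqrt (Ssum j) else 0).

Lemma Ssum_gt0 j : 0 < Ssum j.
Proof.
have [p gp] := g_surj j; rewrite /Ssum (bigD1 p) ?gp //=.
have h1 : 0 < w p ^+ 2 by rewrite exprn_gt0.
have h2 : 0 <= \sum_(i | (g i == j) && (i != p)) w i ^+ 2.
  by apply: sumr_ge0 => q _; apply: sqr_ge0.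
lra.
Qed.

Lemma mkPhi_tr : mkPhi^T *m mkPhi = 1%:M.
Proof.
apply/matrixP => i j; rewrite !mxE.
have c0 := Ssum_gt0 i.
case: (eqVneq i j) => [<-|ij].
  idtac.
  transitivity (\sum_(p | g p == i) w p ^+ 2 / Ssum i).
    rewrite [RHS]big_mkcond /=; apply: eq_bigr => p _; rewrite !mxE.
    case: (g p == i); last by rewrite mulr0.
    by rewrite -expr2 expr_div_n sqr_sqrtr // ltW.
  by rewrite -mulr_suml mulfV // gt_eqF.
rewrite big1 // // => p _; rewrite !mxE.
case: (eqVneq (g p) i) => [gi|]; last by rewrite mul0r.
by rewrite gi (negbTE ij) mulr0.
Qed.

Lemma mkPhi_OIplus : OIplus mkPhi.
Proof.
split; last first.
  move=> p j; rewrite mxE; case: ifP => // _.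
  by apply: divr_ge0; [exact/ltW | exact: sqrtr_ge0].
split; last exact: mkPhi_tr.
exists (fun j => [set p | g p == j]); split.
- move=> j; have [p gp] := g_surj j; apply/set0Pn; exists p; by rewrite inE gp.
- move=> i j ij; apply/pred0P => p /=; rewrite !inE; apply/negbTE/negP => /andP[/eqP-> /eqP h]; by rewrite h eqxx in ij.
- apply/setP => p; rewrite inE; apply/bigcupP; exists (g p) => //; by rewrite inE.
- move=> p j; rewrite mxE inE; case: ifP => _; last by split => // /eqP.
  split => // _; rewrite mulf_neq0 ?invr_eq0 ?gt_eqF //.
  by rewrite sqrtr_gt0 Ssum_gt0.
Qed.

End Mk.

Section Q.
Variables (R : realType) (n k : nat) (B : 'M[R]_n).
Hypothesis hB : adj_ok B.

Lemma sc_dg' p : sc B p * dg B p = Num.sqrt (dg B p).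
Proof.
by rewrite -{1}(sqr_sqrtr (ltW (dg_gt0 hB p))) expr2 mulrA (sc_sqrt hB) mul1r.
Qed.

Lemma eigen (g : 'I_n -> 'I_k) :
  (forall p q, B p q != 0 -> g p = g q) ->
  normadj B *m mkPhi g (fun p => Num.sqrt (dg B p)) = mkPhi g (fun p => Num.sqrt (dg B p)).
Proof.
move=> hg; apply/matrixP => p j; rewrite !mxE.
set c := Num.sqrt (Ssum g (fun p => Num.sqrt (dg B p)) j).
rewrite (eq_bigr (fun q => sc B p * B p q * (if g p == j then c^-1 else 0))); last first.
  move=> q _; rewrite AE mxE.
  case: (eqVneq (B p q) 0) => [->|nz]; first by rewrite !(mulr0, mul0r).
  rewrite (hg _ _ nz); case: ifP => _; last by rewrite !mulr0.
  by rewrite mulrA -(mulrA _ (sc B q)) (sc_sqrt hB) mulr1.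
rewrite -mulr_suml -mulr_sumr -dgE sc_dg'.
by case: ifP => _; rewrite ?mulr0.
Qed.

Definition colf (Phi : 'M[R]_(n, k)) i p := sc B p * Phi p i.

Lemma quad (Phi : 'M[R]_(n, k)) i : Phi^T *m Phi = 1%:M ->
  \sum_p \sum_q B p q * (colf Phi i p - colf Phi i q) ^+ 2 =
  2 * (1 - (Phi^T *m normadj B *m Phi) i i).
Proof.
move=> hP; set f := colf Phi i.
have hX : (Phi^T *m normadj B *m Phi) i i = \sum_p \sum_q B p q * (f p * f q).
  rewrite mxE exchange_big /=; apply: eq_bigr => q _; rewrite mxE mulr_suml.
  apply: eq_bigr => p _; rewrite AE mxE /f /colf; ring.
have hY : 1 = \sum_p \sum_q B p q * f p ^+ 2.
  have := congr1 (fun M : 'M[R]_k => M i i) hP; rewrite !mxE eqxx /=. move=> hh; apply: eq_trans (esym hh) _.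
  apply: eq_bigr => p _; rewrite -mulr_suml -dgE /f /colf mxE.
  have := sc_dg hB p; move: (sc B p) (dg B p) => a b h.
  by rewrite exprMn mulrC mulrA [b * _]mulrC h mul1r expr2.
have hY2 : \sum_p \sum_q B p q * f q ^+ 2 = \sum_p \sum_q B p q * f p ^+ 2.
  rewrite exchange_big /=; apply: eq_bigr => p _; apply: eq_bigr => q _.
  by rewrite (Bsym hB).
have E1 : \sum_p \sum_q B p q * (f p - f q) ^+ 2 =
   \sum_p \sum_q B p q * f p ^+ 2 + \sum_p \sum_q B p q * f q ^+ 2
   - 2 * \sum_p \sum_q B p q * (f p * f q).
  rewrite mulr_sumr -big_split -sumrB /=; apply: eq_bigr => p _.
  rewrite mulr_sumr -big_split -sumrB /=; apply: eq_bigr => q _; ring.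
rewrite E1 hY2 hX -hY; ring.
Qed.

End Q.

Section P.
Variables (R : realType) (n k : nat) (B : 'M[R]_n).
Hypothesis hB : adj_ok B.

Lemma path_bound (f : 'I_n -> R) eta :
  (forall u v, edge B u v -> `|f u - f v| <= eta) ->
  forall x p, path (edge B) x p -> `|f x - f (last x p)| <= (size p)%:R * eta.
Proof.
move=> he x p; elim: p x => [|y p IH] x /=; first by rewrite subrr normr0 mul0r.
move=> /andP[exy hp]; have h1 := he _ _ exy; have h2 := IH _ hp.
have h3 := ler_distD (f y) (f x) (f (last y p)).
rewrite -addn1 natrD mulrDl mul1r; lra.
Qed.

Lemma term_le (Phi : 'M[R]_(n, k)) i p q : Phi^T *m Phi = 1%:M ->
  B p q * (colf B Phi i p - colf B Phi i q) ^+ 2 <= 2 * phicut (normadj B) Phi.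
Proof.
move=> hP; have hq := quad hB i hP.
have hd : 1 - (Phi^T *m normadj B *m Phi) i i <= phicut (normadj B) Phi.
  have := frob_diag (1%:M - Phi^T *m normadj B *m Phi) i.
  by rewrite !mxE eqxx.
suff : B p q * (colf B Phi i p - colf B Phi i q) ^+ 2 <=
  \sum_p \sum_q B p q * (colf B Phi i p - colf B Phi i q) ^+ 2 by rewrite hq; lra.
have hnn : forall p q, 0 <= B p q * (colf B Phi i p - colf B Phi i q) ^+ 2.
  by move=> a b; apply: mulr_ge0; [exact: B_ge0|exact: sqr_ge0].
rewrite (bigD1 p) //= (bigD1 q) //= -addrA lerDl.
apply: addr_ge0; first by apply: sumr_ge0 => b _.
by apply: sumr_ge0 => a _; apply: sumr_ge0 => b _.
Qed.


Lemma lower_bound : (0 < k)%N -> (k <= n)%N ->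
  exists delta, 0 < delta /\ forall Phi : 'M[R]_(n, k), OIplus Phi ->
    phicut (normadj B) Phi < delta -> (k <= n_comp (edge B) predT)%N.
Proof.
move=> k0 hkn.
have hpos : forall pq : 'I_n * 'I_n, B pq.1 pq.2 != 0 -> 0 < B pq.1 pq.2.
  by move=> pq h; rewrite lt0r h B_ge0.
have [b0 [b00 hb0]] := @fin_lb R _ (fun pq : 'I_n * 'I_n => B pq.1 pq.2 != 0)
   (fun pq => B pq.1 pq.2) hpos.
have [s0 [s00 hs0]] := @fin_lb R _ predT (sc B) (fun p _ => sc_gt0 hB p).
set N : R := n%:R.
have N1 : 1 <= N by rewrite /N ler1n; apply: leq_trans hkn.
set eta := s0 / (N * N).
have eta0 : 0 < eta by rewrite divr_gt0 // mulr_gt0 //; lra.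
have etaN : eta * N * N = s0.
  have hN : N != 0 by apply: lt0r_neq0; lra.
  by rewrite /eta; field; rewrite hN.
exists (b0 * eta ^+ 2 / 2); split; first by rewrite divr_gt0 // mulr_gt0 // exprn_gt0.
move=> Phi [[[Rs [Rs0 Rsd Rsc RsP]] hP] Pge0] hcut.
have hedge : forall i u v, edge B u v ->
    `|colf B Phi i u - colf B Phi i v| <= eta.
  move=> i u v euv; have ht := term_le i u v hP.
  have hb := hb0 (u, v) euv; rewrite /= in hb.
  set D := colf B Phi i u - colf B Phi i v in ht *.
  have hD : D ^+ 2 <= eta ^+ 2.
    rewrite leNgt; apply/negP => hlt.
    have : b0 * eta ^+ 2 < B u v * D ^+ 2.
      apply: le_lt_trans (ler_wpM2r (ltW (exprn_gt0 2 eta0)) hb) _.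
      by rewrite ltr_pM2l // (lt_le_trans b00 hb).
    lra.
  rewrite ler_norml; apply/andP; split; nra.
have hcol : forall j, \sum_p Phi p j ^+ 2 = 1.
  move=> j; have := congr1 (fun M : 'M[R]_k => M j j) hP; rewrite !mxE eqxx /=.
  move=> hh; apply: eq_trans _ hh; apply: eq_bigr => p _; by rewrite mxE expr2.
pose pp j := odflt (widen_ord hkn j) [pick p | [forall q, Phi q j <= Phi p j]].
have ppP : forall j q, Phi q j <= Phi (pp j) j.
  move=> j; rewrite /pp; case: pickP => [p /forallP //|hn].
  have [p hp] := fin_max (fun p => Phi p j) (widen_ord hkn j).
  by move: (hn p); rewrite (introT forallP hp).
have ppN : forall j, 1 <= N * Phi (pp j) j.
  move=> j; have hs : \sum_(p < n) Phi p j ^+ 2 <= N * Phi (pp j) j ^+ 2.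
    have -> : N * Phi (pp j) j ^+ 2 = \sum_(p < n) Phi (pp j) j ^+ 2.
      by rewrite sumr_const card_ord mulr_natl.
    apply: ler_sum => p _.
    have := ppP j p; have := Pge0 p j; move=> a b; nra.
  rewrite hcol in hs; have := Pge0 (pp j) j; nra.
have fpp : forall j, s0 <= N * colf B Phi j (pp j).
  move=> j; have := ppN j; have := hs0 (pp j) isT; have := Pge0 (pp j) j.
  rewrite /colf; nra.
have ppR : forall j, pp j \in Rs j.
  move=> j; apply/RsP; apply: lt0r_neq0; have := ppN j; have := Pge0 (pp j) j; nra.
have zero : forall i j, i != j -> colf B Phi i (pp j) = 0.
  move=> i j ij; rewrite /colf; case: (eqVneq (Phi (pp j) i) 0) => [->|nz].
    by rewrite mulr0.
  move/RsP: nz => hi; have := disjointFr (Rsd _ _ ij) hi; by rewrite ppR.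
have inj : injective (fun j => fingraph.root (edge B) (pp j)).
  move=> i j /= hr; apply/eqP; apply/negP => /negP ij.
  move/(fingraph.rootP (csym hB))/connectP: hr => [p hp hl].
  move: hl; case: (shortenP hp) => p' hp' hu _ hl {hp}.
  have hsz : (size p' < n)%N.
    have := max_card (mem (pp i :: p')); rewrite card_ord.
    by move/card_uniqP: hu => -> /=.
  have hb := path_bound (hedge i) hp'; rewrite -hl (zero i j ij) subr0 in hb.
  have hL : (size p')%:R <= N - 1.
    rewrite /N -(ler_nat R) in hsz; move: hsz; rewrite -addn1 natrD; lra.
  have hf := fpp i; have hf0 : 0 <= colf B Phi i (pp i).
    by rewrite /colf; apply: mulr_ge0; [exact/ltW/sc_gt0|exact: Pge0].
  rewrite ger0_norm // in hb.
  have h1 : colf B Phi i (pp i) <= (N - 1) * eta.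
    by apply: le_trans hb _; apply: ler_wpM2r => //; exact: ltW.
  have h2 : N * colf B Phi i (pp i) <= N * ((N - 1) * eta).
    by apply: ler_wpM2l => //; lra.
  have : N * ((N - 1) * eta) = s0 - N * eta by rewrite -etaN; ring.
  have : 0 < N * eta by apply: mulr_gt0 => //; lra.
  lra.
have := card_image inj (mem predT); rewrite card_ord => <-.
rewrite /n_comp_mem; apply: subset_leq_card; apply/fintype.subsetP => x /mapP[j _ ->].
by rewrite !inE /= fingraph.roots_root //; apply: csym.
Qed.

End P.

Lemma phicut_zero (R : realType) n k (A : 'M[R]_n) (Phi : 'M[R]_(n, k)) :
  A *m Phi = Phi -> Phi^T *m Phi = 1%:M -> phicut A Phi = 0.
Proof.
move=> hA hP; rewrite /phicut -mulmxA hA hP subrr /frob big1 ?sqrtr0 // => i _.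
by rewrite big1 // => j _; rewrite mxE expr2 mulr0.
Qed.

Theorem proposition3 (R : realType) (n k : nat) (B : 'M[R]_n) :
  adj_ok B -> (1 <= k <= n)%N ->
  let A := normadj B in
  [/\ (forall Phi : 'M[R]_(n, k), OIplus Phi ->
         0 <= phicut A Phi /\
         (forall s : 'S_n,
            frob (1%:M - (perm_mx s *m Phi)^T *m (perm_mx s *m A *m (perm_mx s)^T)
                           *m (perm_mx s *m Phi)) = phicut A Phi)),
      (phicutG k A = 0 <-> partitionable B k)
    & Lk k A <= phicutG k A].
Proof.
move=> hB /andP[k0 hkn] A.
have kk : (k.-1 < k)%N by rewrite ltn_predL.
set S := (fun x : R => exists Phi : 'M[R]_(n, k), OIplus Phi /\ x = phicut A Phi).
pose g0 (p : 'I_n) : 'I_k := Ordinal (leq_ltn_trans (geq_minr p k.-1) kk).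
have Sne : nonempty S.
  exists (phicut A (mkPhi g0 (fun _ => 1))); exists (mkPhi g0 (fun _ => 1)); split => //.
  apply: mkPhi_OIplus => [p|j]; first exact: ltr01.
  exists (widen_ord hkn j); apply/val_inj => /=; apply/minn_idPl.
  by rewrite -ltnS prednK.
have Slb : has_lbound S.
  by exists 0 => x [Phi [_ ->]]; exact: frob_ge0.
have inf_ge0 : 0 <= phicutG k A.
  by apply: lb_le_inf Sne _ => x [Phi [_ ->]]; exact: frob_ge0.
have inf_le : forall Phi : 'M[R]_(n, k), OIplus Phi -> phicutG k A <= phicut A Phi.
  by move=> Phi hP; exact: (ge_inf Slb) (ex_intro _ Phi (conj hP erefl)).
split.
- move=> Phi hPhi; split; first exact: frob_ge0.
  move=> s; rewrite /phicut; congr frob; congr (_ - _).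
  set P := perm_mx s.
  have hPP : P^T *m P = 1%:M by rewrite /P tr_perm_mx -perm_mxM mulVg perm_mx1.
  rewrite trmx_mul !mulmxA.
  by rewrite -(mulmxA (Phi^T) (P^T) P) hPP mulmx1 -(mulmxA _ P^T P) hPP mulmx1.
- split.
  + move=> h0; have [d [d0 hd]] := lower_bound hB k0 hkn.
    have hlt : phicutG k A < d by rewrite h0.
    have [x [Phi [hP ->]] hx] := inf_lt Sne hlt.
    exact: hd hP hx.
  + move=> hpart; apply/le_anti; rewrite inf_ge0 andbT.
    set e := edge B; set rs := enum (roots e).
    have hsz : (k <= size rs)%N.
      rewrite -cardE; apply: leq_trans hpart _; rewrite /n_comp_mem.
      by apply: subset_leq_card; apply/fintype.subsetP => x; rewrite !inE => /andP[].
    pose g (p : 'I_n) : 'I_k :=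
      Ordinal (leq_ltn_trans (geq_minr (index (fingraph.root e p) rs) k.-1) kk).
    have hg : forall p q, B p q != 0 -> g p = g q.
      move=> p q hpq.
      have hr : fingraph.root e p = fingraph.root e q.
        by apply/(fingraph.rootP (csym hB)); apply: connect1.
      by apply/val_inj; rewrite /= hr.
    have gs : forall j, exists p, g p = j.
      move=> j; have hj : (j < size rs)%N by apply: leq_trans hsz.
      exists (nth (widen_ord hkn j) rs j); apply/val_inj => /=.
      have : nth (widen_ord hkn j) rs j \in rs by exact: mem_nth.
      rewrite mem_enum => /eqP ->.
      rewrite index_uniq ?enum_uniq //; apply/minn_idPl.
      by rewrite -ltnS prednK.
    have hw : forall p, 0 < Num.sqrt (dg B p) by move=> p; rewrite sqrtr_gt0 (dg_gt0 hB).
    have hO := mkPhi_OIplus hw gs.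
    apply: le_trans (inf_le _ hO) _.
    rewrite phicut_zero //; last by case: hO => [[_ ->]].
    exact: eigen.
- rewrite /Lk; apply: lb_le_inf Sne _ => x [Phi [hP ->]].
  apply: ge_inf; first by exists 0 => y [Y [_ ->]]; exact: frob_ge0.
  by exists Phi; split => //; case: hP => [[_ ->]].
Qed.
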